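(* Let $p$ be an odd prime and $m$ a positive integer not divisible by $p$. Then $$\sum_{r=1}^m rK_p(r,m)\equiv-q_p(m)\pmod p,$$ where $K_p(r,m)=\sum_{1\le k\le p-1,\ m\mid k-rp}\frac1k$ and $q_p(m)=(m^{p-1}-1)/p$ is the Fermat quotient.
   Context: Congruences modulo $p$ are between rational numbers whose denominators are prime to $p$. *)

(* Defs.v *)
From mathcomp Require Import all_boot all_order all_algebra.
Set Implicit Arguments. Unset Strict Implicit. Unset Printing Implicit Defensive.
Import Order.TTheory GRing.Theory Num.Theory.
Local Open Scope ring_scope.

Definition p_integral (p : nat) (z : rat) : bool := coprime p `|denq z|%N.

Definition rat_congr (p : nat) (x y : rat) : Prop :=
  p_integral p x /\ p_integral p y /\
  exists z : rat, p_integral p z /\ x - y = p%:R * z.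

Definition Kp (p r m : nat) : rat :=
  \sum_(1 <= k < p | (m%:Z %| k%:Z - r%:Z * p%:Z)%Z) (k%:R)^-1.

Definition fermat_quotient (p m : nat) : rat :=
  ((m%:R) ^+ p.-1 - 1) / p%:R.

(* Main.v *)
Require Import Defs.
From mathcomp Require Import all_boot all_order all_algebra.
From mathcomp Require Import zify ring lra.
Import Order.TTheory GRing.Theory Num.Theory.
Local Open Scope ring_scope.
Set Implicit Arguments. Unset Strict Implicit.

Definition Zp (p : nat) (z : rat) := exists (a : int) (b : nat), coprime p b /\ z = a%:~R / b%:R.

Lemma Zp_int p (a : int) : Zp p a%:~R.
Proof. exists a, 1%N; split; [exact: coprimen1 | by rewrite divr1]. Qed.

Lemma Zp_nat p (n : nat) : Zp p n%:R.
Proof. by have := Zp_int p n; rewrite pmulrn. Qed.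

Lemma Zp_add p x y : Zp p x -> Zp p y -> Zp p (x + y).
Proof.
move=> [a [b [cb ->]]] [c [d [cd ->]]].
have [->|b0] := eqVneq b 0%N.
  by exists c, d; split => //; rewrite invr0 mulr0 add0r.
have [->|d0] := eqVneq d 0%N.
  by exists a, b; split => //; rewrite invr0 mulr0 addr0.
exists (a * d%:Z + c * b%:Z), (b * d)%N; split; first by rewrite coprimeMr cb cd.
rewrite natrM rmorphD !rmorphM /= !pmulrn -!intrM.
field; apply/andP; split; rewrite pnatr_eq0 //.
Qed.
Lemma dummy : True. Proof. by [].
Qed.

Lemma Zp_mul p x y : Zp p x -> Zp p y -> Zp p (x * y).
Proof.
move=> [a [b [cb ->]]] [c [d [cd ->]]].
exists (a * c), (b * d)%N; split; first by rewrite coprimeMr cb cd.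
by rewrite natrM rmorphM /= invfM; ring.
Qed.

Lemma Zp_opp p x : Zp p x -> Zp p (- x).
Proof. move=> [a [b [cb ->]]]; exists (- a), b; split => //; rewrite rmorphN /=; ring. Qed.

Lemma Zp_sub p x y : Zp p x -> Zp p y -> Zp p (x - y).
Proof. by move=> hx hy; apply: Zp_add => //; apply: Zp_opp. Qed.

Lemma Zp_invn p (n : nat) : coprime p n -> Zp p (n%:R)^-1.
Proof. by move=> c; exists 1, n; split => //; rewrite div1r. Qed.

Lemma Zp_sum p (I : Type) (s : seq I) (P : pred I) (F : I -> rat) :
  (forall i, P i -> Zp p (F i)) -> Zp p (\sum_(i <- s | P i) F i).
Proof.
move=> h; apply: (big_ind (Zp p)) => //; first exact: (Zp_nat p 0).
exact: Zp_add.
Qed.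

Lemma Zp_pint p z : Zp p z -> coprime p `|denq z|%N.
Proof.
move=> [a [b [cb ->]]].
have [->|b0] := eqVneq b 0%N; first by rewrite invr0 mulr0 (denq_int 0) coprimen1.
have -> : (b%:R : rat) = (b%:Z)%:~R by rewrite pmulrn.
suff H : forall d : int, d = b -> coprime p `|denq (a%:~R / d%:~R)| by exact: H.
move=> d; case: divqP => [E|k x k0]; first by move=> /eqP; rewrite eq_sym eqz_nat (negPf b0).
move=> E; have : (`|denq x| %| b)%N.
  by apply/dvdnP; exists `|k|%N; rewrite -abszM E.
move=> dv; exact: coprime_dvdr dv cb.
Qed.

Lemma Zp_sum_nat p (a b : nat) (F : nat -> rat) :
  (forall i, (a <= i < b)%N -> Zp p (F i)) -> Zp p (\sum_(a <= i < b) F i).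
Proof. by move=> h; rewrite big_nat_cond; apply: Zp_sum => i /andP [hi _]; exact: h. Qed.

Lemma prod_lin (p : nat) (s : seq nat) (x : nat -> rat) :
  (forall i, Zp p (x i)) ->
  exists w, Zp p w /\ \prod_(i <- s) (1 + p%:R * x i) = 1 + p%:R * \sum_(i <- s) x i + p%:R ^+ 2 * w.
Proof.
move=> hx; elim: s => [|a s [w [hw E]]].
  by exists 0; split; [exact: (Zp_nat p 0) | rewrite !big_nil; ring].
exists (x a * \sum_(i <- s) x i + w + p%:R * x a * w); split.
  apply: Zp_add; [apply: Zp_add => //|].
    by apply: Zp_mul => //; exact: Zp_sum.
  by apply: Zp_mul => //; apply: Zp_mul => //; exact: Zp_nat.
by rewrite !big_cons E; ring.
Qed.

Lemma harmonic (p : nat) : prime p -> odd p ->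
  exists w, Zp p w /\ \sum_(1 <= k < p) ((k%:R : rat)^-1) = p%:R * w.
Proof.
move=> pp op.
have p2 : (2 < p)%N.
  have := prime_gt1 pp; case: p pp op => [|[|[|]]] //.
set S := \sum_(1 <= k < p) ((k%:R : rat)^-1).
have E : S = \sum_(1 <= k < p) ((p - k)%:R : rat)^-1.
  rewrite /S big_nat_rev; apply: eq_big_nat => k hk; congr (_ ^-1); congr (_%:R); lia.
exists (2%:R^-1 * \sum_(1 <= k < p) ((k%:R * (p - k)%:R) : rat)^-1); split.
  apply: Zp_mul; first by apply: Zp_invn; rewrite prime_coprime // dvdn_prime2 //; lia.
  apply: Zp_sum_nat => k hk; rewrite -natrM; apply: Zp_invn.
  rewrite prime_coprime // Euclid_dvdM // negb_or.
  apply/andP; split; apply/negP => /dvdn_leq; lia.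
have : 2%:R * S = p%:R * \sum_(1 <= k < p) ((k%:R * (p - k)%:R) : rat)^-1.
  rewrite mulr2n mulrDl mul1r {2}E -big_split mulr_sumr /=; apply: eq_big_nat => k hk.
  rewrite natrB; last lia.
  field; rewrite -natrB; last lia.
  by rewrite !pnatr_eq0; apply/andP; split; lia.
move=> h; apply: (@mulfI _ 2%:R); first by rewrite pnatr_eq0.
by rewrite h; field.
Qed.
Lemma sum_uniq (a b i : nat) (P : pred nat) (F : nat -> rat) :
  (a <= i < b)%N -> (forall j, (a <= j < b)%N -> P j = (j == i)) ->
  \sum_(a <= j < b | P j) F j = F i.
Proof.
move=> hi h; rewrite big_nat_cond (eq_bigl (fun j => j == i)) ?big_nat1_eq ?hi //.
move=> j /=; case: (boolP (a <= j < b)%N) => hj /=; first by rewrite h.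
by apply/esym/negP => /eqP E; move: hj; rewrite E hi.
Qed.

Lemma sum_none (a b : nat) (P : pred nat) (F : nat -> rat) :
  (forall j, (a <= j < b)%N -> ~~ P j) -> \sum_(a <= j < b | P j) F j = 0.
Proof.
move=> h; rewrite big_nat_cond big1 // => j /andP [hj Pj].
by move: (h j hj); rewrite Pj.
Qed.

Lemma dvdz_conv (m p r k : nat) : (k < r * p)%N ->
  (m%:Z %| k%:Z - r%:Z * p%:Z)%Z = (m %| r * p - k)%N.
Proof. move=> h.
have -> : k%:Z - r%:Z * p%:Z = - (r * p - k)%N%:Z.
  by rewrite -subzn ?PoszM; [rewrite opprB | exact: ltnW].
by rewrite dvdzE abszN.
Qed.

Lemma t2 (p f r k rho : nat) : (0 < rho < p)%N -> (0 < k < p)%N ->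
  (f * p + rho + k = r * p)%N -> (r = f.+1)%N /\ (k = p - rho)%N.
Proof. move=> h1 h2 e.
have a : (f < r)%N.
  case: (ltnP f r) => // h; have := leq_mul h (leqnn p); lia.
have b : (r < f.+2)%N.
  case: (ltnP r f.+2) => // h; have := leq_mul h (leqnn p); rewrite !mulSn; lia.
have er : r = f.+1 by lia.
split => //; subst r.
rewrite mulSn in e; lia.
Qed.

Lemma rho_pos (p m j : nat) : prime p -> ~~ (p %| m)%N -> (0 < j < p)%N ->
  (0 < (j * m) %% p < p)%N.
Proof.
move=> pp pm /andP [j0 jp]; rewrite ltn_mod (prime_gt0 pp) andbT lt0n.
apply/negP => /eqP h.
have : (p %| j * m)%N by rewrite /dvdn h.
rewrite Euclid_dvdM // (negPf pm) orbF => /dvdn_leq => /(_ j0); lia.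
Qed.

Lemma step1 (p m : nat) : prime p -> (0 < m)%N -> ~~ (p %| m)%N ->
  \sum_(1 <= r < m.+1) r%:R * (\sum_(1 <= k < p | (m%:Z %| k%:Z - r%:Z * p%:Z)%Z) (k%:R)^-1 : rat)
  = \sum_(1 <= j < p) ((j * m) %/ p).+1%:R / (p - (j * m) %% p)%:R.
Proof.
move=> pp m0 pm.
have p0 : (0 < p)%N by apply: prime_gt0.
transitivity (\sum_(1 <= r < m.+1) \sum_(1 <= k < p) \sum_(1 <= j < p)
   (if (j * m + k == r * p)%N then r%:R * (k%:R)^-1 else 0 : rat)).
  apply: eq_big_nat => r /andP [r1 rm].
  rewrite mulr_sumr big_mkcond; apply: eq_big_nat => k /andP [k1 kp].
  have krp : (k < r * p)%N by apply: (leq_trans kp); rewrite leq_pmull.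
  rewrite -big_mkcond /= dvdz_conv //.
  case: ifP => c.
    have [i ei] : exists i, (r * p - k = i * m)%N by apply/dvdnP: c.
    rewrite (@sum_uniq _ _ i).
    + by [].
    + apply/andP; split.
        by case: i ei => [|i]; [lia | ].
      rewrite -(ltn_pmul2r m0); apply: (@leq_trans (r * p)); first lia.
      by rewrite mulnC leq_mul2l -ltnS rm orbT.
    + by move=> j _; apply/eqP/eqP => [E|->]; [apply/eqP; rewrite -(eqn_pmul2r m0); apply/eqP; lia | lia].
  symmetry; rewrite sum_none // => j _; apply/negP => /eqP E.
  by move/negP: c; apply; apply/dvdnP; exists j; lia.
under eq_big_nat => r hr do rewrite exchange_big_nat.
rewrite exchange_big_nat /=; apply: eq_big_nat => j /andP [j1 jp].
set f := ((j * m) %/ p)%N; set rho := ((j * m) %% p)%N.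
have hrho : (0 < rho < p)%N by apply: rho_pos => //; rewrite j1.
have ejm : (j * m = f * p + rho)%N by apply: divn_eq.
have fm : (f < m)%N by rewrite ltn_divLR // mulnC ltn_mul2l m0 jp.
transitivity (\sum_(1 <= r < m.+1 | r == f.+1) (r%:R * ((p - rho)%:R)^-1 : rat)).
  rewrite [RHS]big_mkcond; apply: eq_big_nat => r /andP [r1 rm].
  rewrite -big_mkcond /=.
  case: eqP => [er|ner].
    rewrite (@sum_uniq _ _ (p - rho)); first by [].
      lia.
    move=> k /andP [k1 kp]; rewrite ejm er mulSn; apply/eqP/eqP; lia.
  rewrite sum_none // => k hk; apply/negP => /eqP E.
  have [] := @t2 p f r k rho hrho hk; first lia.
  by move=> /ner.
by rewrite big_nat1_eq; case: ifP => //; lia.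
Qed.
Lemma rho_inj_aux (p m a b : nat) : prime p -> ~~ (p %| m)%N -> (a <= b)%N -> (b < p)%N ->
  ((a * m) %% p = (b * m) %% p)%N -> a = b.
Proof.
move=> pp pm ab bp E.
have : (p %| (b - a) * m)%N.
  by rewrite mulnBl -eqn_mod_dvd ?leq_mul2r ?ab ?orbT // E.
rewrite Euclid_dvdM // (negPf pm) orbF.
case: (posnP (b - a)) => [h|h]; first lia.
move=> /dvdn_leq => /(_ h); lia.
Qed.

Lemma rho_perm (p m : nat) : prime p -> ~~ (p %| m)%N ->
  perm_eq (map (fun j => (j * m) %% p)%N (index_iota 1 p)) (index_iota 1 p).
Proof.
move=> pp pm.
have U : uniq (map (fun j => (j * m) %% p)%N (index_iota 1 p)).
  rewrite map_inj_in_uniq ?iota_uniq // => a b; rewrite !mem_index_iota => ha hb E.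
  case: (leqP a b) => h.
    by apply: (rho_inj_aux pp pm h) => //; lia.
  by apply/esym; apply: (rho_inj_aux pp pm (ltnW h)) => //; lia.
have S : {subset map (fun j => (j * m) %% p)%N (index_iota 1 p) <= index_iota 1 p}.
  move=> x /mapP [j]; rewrite !mem_index_iota => hj ->.
  by have := rho_pos pp pm hj.
have [_ eqs] := uniq_min_size U S (eq_leq (esym (size_map _ _))).
by apply: uniq_perm => //; apply: iota_uniq.
Qed.

Lemma reindex_rho (R : Type) (idx : R) (op : Monoid.com_law idx) (p m : nat) (F : nat -> R) :
  prime p -> ~~ (p %| m)%N ->
  \big[op/idx]_(1 <= j < p) F ((j * m) %% p)%N = \big[op/idx]_(1 <= k < p) F k.
Proof.
move=> pp pm; rewrite -(big_map (fun j => (j * m) %% p)%N predT F).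
exact: perm_big (rho_perm pp pm).
Qed.

Lemma Zp_frac p (a b : nat) : prime p -> Zp p (a%:R / (b %% p)%:R).
Proof.
move=> pp; apply: Zp_mul; first exact: Zp_nat.
case: (posnP (b %% p)) => [->|h]; first by rewrite invr0; exact: (Zp_nat p 0).
apply: Zp_invn; rewrite prime_coprime //; apply/negP => /dvdn_leq => /(_ h).
by rewrite leqNgt ltn_mod prime_gt0.
Qed.

Lemma lerch (p m : nat) : prime p -> ~~ (p %| m)%N ->
  exists w, Zp p w /\ fermat_quotient p m =
    \sum_(1 <= j < p) ((j * m) %/ p)%:R / ((j * m) %% p)%:R + p%:R * w.
Proof.
move=> pp pm.
have [w [hw E]] := @prod_lin p (index_iota 1 p)
   (fun j => ((j * m) %/ p)%:R / ((j * m) %% p)%:R) (fun i => Zp_frac _ _ pp).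
exists w; split => //.
set L := \prod_(1 <= j < p) (j%:R : rat).
have L0 : L != 0.
  by rewrite prodf_seq_neq0; apply/allP => j; rewrite mem_index_iota pnatr_eq0 /=; lia.
have H1 : \prod_(1 <= j < p) ((j * m)%:R : rat) = (m%:R) ^+ (p - 1) * L.
  by rewrite /L -prodr_const_nat -big_split /=; apply: eq_big_nat => j _; rewrite natrM mulrC.
have H2 : \prod_(1 <= j < p) ((j * m)%:R : rat) =
   L * \prod_(1 <= j < p) (1 + p%:R * (((j * m) %/ p)%:R / ((j * m) %% p)%:R)).
  rewrite /L -(reindex_rho _ (fun k => (k%:R : rat)) pp pm) -big_split /=.
  apply: eq_big_nat => j hj.
  have hr := rho_pos pp pm hj.
  rewrite {1}(divn_eq (j * m) p) natrD natrM.
  field; rewrite pnatr_eq0; lia.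
have H3 : (m%:R : rat) ^+ (p - 1) = 1 + p%:R * \sum_(1 <= j < p) (((j * m) %/ p)%:R / ((j * m) %% p)%:R) + p%:R ^+ 2 * w.
  apply: (mulIf L0); rewrite -H1 H2 E; ring.
rewrite /fermat_quotient -subn1 H3; field.
by rewrite pnatr_eq0 -lt0n prime_gt0.
Qed.

Unset Implicit Arguments.
Theorem corollary2p2 (p m : nat) :
  prime p -> odd p -> (0 < m)%N -> ~~ (p %| m)%N ->
  rat_congr p (\sum_(1 <= r < m.+1) r%:R * Kp p r m) (- fermat_quotient p m).
Proof.
move=> pp op m0 pm.
rewrite /Kp step1 //.
have [w3 [hw3 E3]] := lerch pp pm.
have [w2 [hw2 E2]] := harmonic pp op.
set f := fun j => ((j * m) %/ p)%N.
set rho := fun j => ((j * m) %% p)%N.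
set W1 := \sum_(1 <= j < p) ((f j).+1%:R / ((rho j)%:R * (p - rho j)%:R) : rat).
have hW1 : Zp p W1.
  apply: Zp_sum_nat => j hj; apply: Zp_mul; first exact: Zp_nat.
  have hr := rho_pos pp pm hj.
  rewrite -natrM; apply: Zp_invn; rewrite prime_coprime // Euclid_dvdM // negb_or.
  apply/andP; split; apply/negP => /dvdn_leq; rewrite /rho; lia.
have E1 : \sum_(1 <= j < p) ((f j).+1%:R / (p - rho j)%:R : rat) =
   - \sum_(1 <= j < p) ((f j)%:R / (rho j)%:R) - \sum_(1 <= j < p) ((rho j)%:R^-1 : rat)
   + p%:R * W1.
  rewrite /W1 mulr_sumr -!sumrN -!big_split /=; apply: eq_big_nat => j hj.
  have hr := rho_pos pp pm hj.
  rewrite natrB; last by rewrite /rho; lia.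
  rewrite -addn1 natrD.
  field; rewrite -natrB; last by rewrite /rho; lia.
  by rewrite !pnatr_eq0; apply/andP; split; rewrite /rho; lia.
have E4 : \sum_(1 <= j < p) ((rho j)%:R^-1 : rat) = p%:R * w2.
  by rewrite -E2 /rho (reindex_rho _ (fun k => (k%:R : rat)^-1) pp pm).
have Zq : Zp p (fermat_quotient p m).
  rewrite E3; apply: Zp_add; last by apply: Zp_mul => //; exact: Zp_nat.
  by apply: Zp_sum => j _; apply: Zp_frac.
rewrite E1 E4.
have -> : \sum_(1 <= j < p) ((f j)%:R / (rho j)%:R : rat) = fermat_quotient p m - p%:R * w3.
  by rewrite E3; ring.
split; last split.
- apply: Zp_pint.
  have -> : - (fermat_quotient p m - p%:R * w3) - p%:R * w2 + p%:R * W1 =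
     - fermat_quotient p m + p%:R * (w3 - w2 + W1) by ring.
  apply: Zp_add; first exact: Zp_opp.
  apply: Zp_mul; first exact: Zp_nat.
  by apply: Zp_add => //; apply: Zp_sub.
- by apply: Zp_pint; apply: Zp_opp.
- exists (w3 - w2 + W1); split; last by ring.
  apply: Zp_pint; apply: Zp_add => //; exact: Zp_sub.
Qed.
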